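(* Let $a,b,c,d\in\mathbb{K}$ with $a\ne b$ and $c\ne d$, and let $\mathcal R_1=(1-a\tau)(1-b\tau)^{-1}$ and $\mathcal R_2=(1-c\tau)^{-1}(1-d\tau)$ in $\mathbb{K}(\tau)$. Then $\mathcal R_1=\mathcal R_2$ if and only if $c=b[1]\ln'(a-b)$ and $d=a[1]\ln'(a-b)$; equivalently, if and only if $a[1]=d/\ln'(c-d)$ and $b[1]=c/\ln'(c-d)$.
   Context: Fix $h\in\mathbb{C}^\times$. $\mathbb{K}=\mathbb{C}(x)$; for $f\in\mathbb{K}$, $f[i](x)=f(x-ih)$ and $\ln'(f)=f/f[1]$. $\mathbb{K}[\tau]$ is the ring of difference operators $\sum_ja_j\tau^j$ ($a_j\in\mathbb{K}$) with $\tau f=f[1]\tau$, and $\mathbb{K}(\tau)$ is its division ring of fractions. *)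

(* Defs.v *)
From HB Require Import structures.
From mathcomp Require Import all_boot all_order all_algebra.
From mathcomp Require Import generic_quotient fraction.
From mathcomp Require Import reals complex.
Set Implicit Arguments. Unset Strict Implicit. Unset Printing Implicit Defensive.
Import Order.TTheory GRing.Theory Num.Theory.
Local Open Scope ring_scope.

(* K = C(x), rational functions over C, as the fraction field of C[x]. *)
Definition Kfield (R : realType) := {fraction {poly R[i]}}.

Definition shiftp (R : realType) (h : R[i]) (k : nat) (p : {poly R[i]})
  : {poly R[i]} := p \Po ('X - (k%:R * h)%:P).

(* f[k](x) = f(x - k h), for f in K = C(x) (computed on a representative
   numerator/denominator pair; independent of the representative). *)
Definition shiftK (R : realType) (h : R[i]) (k : nat) (f : Kfield R)
  : Kfield R :=
  let r := repr f in
  (tofrac (shiftp h k (\n_r))) / (tofrac (shiftp h k (\d_r))).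

Definition lnp (R : realType) (h : R[i]) (f : Kfield R) : Kfield R :=
  f / shiftK h 1 f.

(* Main.v *)
From HB Require Import structures.
From mathcomp Require Import all_boot all_order all_algebra.
From mathcomp Require Import ring.
From mathcomp Require Import generic_quotient fraction reals complex.
Require Import Defs.
Import Order.TTheory GRing.Theory Num.Theory.
Local Open Scope ring_scope.

Section Gen.
Variables (K : fieldType) (D : unitRingType).
Hypothesis D_div : forall u : D, u != 0 -> u \is a GRing.unit.
Variables (iota : {rmorphism K -> D}) (t : D) (sh : K -> K).
Hypothesis t_comm : forall f : K, t * iota f = iota (sh f) * t.
Hypothesis t_free : forall (n : nat) (s : 'I_n -> K),
      \sum_(i < n) iota (s i) * t ^+ i = 0 -> forall i, s i = 0.

Lemma coef3 p0 p1 p2 q0 q1 q2 :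
  iota p0 + iota p1 * t + iota p2 * t ^+ 2 = iota q0 + iota q1 * t + iota q2 * t ^+ 2 ->
  [/\ p0 = q0, p1 = q1 & p2 = q2].
Proof.
move=> E.
pose s : 'I_3 -> K := fun i => [:: p0 - q0; p1 - q1; p2 - q2]`_i.
have H := @t_free 3 s.
have Hs : \sum_(i < 3) iota (s i) * t ^+ i = 0.
  rewrite !big_ord_recr big_ord0 /= /s /= !rmorphB expr0 expr1 mulr1 add0r.
  rewrite !mulrBl; move/eqP: E; rewrite -subr_eq0 => /eqP <-.
  by rewrite !opprD (addrACA (iota p0 + iota p1 * t)) (addrACA (iota p0)).
have := H Hs (@Ordinal 3 0 isT); have := H Hs (@Ordinal 3 1 isT);
have := H Hs (@Ordinal 3 2 isT); rewrite /s /= => /eqP; rewrite subr_eq0 => /eqP ->.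
by move/eqP; rewrite subr_eq0 => /eqP ->; move/eqP; rewrite subr_eq0 => /eqP ->.
Qed.

Lemma coef1 u v : iota u * t = iota v * t -> u = v.
Proof.
move=> E; have [] := @coef3 0 u 0 0 v 0 => //.
by rewrite !rmorph0 !mul0r !addr0 !add0r.
Qed.

Lemma t_neq0 : t != 0.
Proof.
apply/eqP => E; have := @coef1 1 0; rewrite E !mulr0 => /(_ erefl) /eqP.
by rewrite oner_eq0.
Qed.

Lemma t_unit : t \is a GRing.unit.
Proof. exact: D_div t_neq0. Qed.

Lemma shD f g : sh (f + g) = sh f + sh g.
Proof. apply: coef1; by rewrite -t_comm !rmorphD mulrDl mulrDr !t_comm. Qed.

Lemma shN f : sh (- f) = - sh f.
Proof. apply: coef1; by rewrite -t_comm !rmorphN mulrN t_comm mulNr. Qed.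

Lemma shB f g : sh (f - g) = sh f - sh g.
Proof. by rewrite shD shN. Qed.

Lemma shM f g : sh (f * g) = sh f * sh g.
Proof.
apply: coef1; by rewrite -t_comm rmorphM mulrA t_comm -mulrA t_comm mulrA rmorphM.
Qed.

Lemma sh_eq0 f : (sh f == 0) = (f == 0).
Proof.
apply/eqP/eqP => [E|->]; last first.
  apply: coef1; by rewrite -t_comm !rmorph0 mulr0 mul0r.
have : t * iota f = 0 by rewrite t_comm E rmorph0 mul0r.
move/(congr1 (fun x => t^-1 * x)); rewrite mulKr ?t_unit // mulr0 => /eqP.
by rewrite fmorph_eq0 => /eqP.
Qed.

Lemma one_sub_unit x : 1 - iota x * t \is a GRing.unit.
Proof.
apply: D_div; apply/eqP => E.
have [] := @coef3 1 (-x) 0 0 0 0 => //; last by move/eqP; rewrite oner_eq0.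
by rewrite !rmorph0 !mul0r !addr0 rmorph1 rmorphN mulNr.
Qed.

Lemma expand x y : (1 - iota x * t) * (1 - iota y * t)
  = iota 1 + iota (- (x + y)) * t + iota (x * sh y) * t ^+ 2.
Proof.
rewrite mulrBr mulr1 mulrBl mul1r -mulrA (mulrA t) t_comm !mulrA -rmorphM -mulrA -expr2.
rewrite rmorph1 rmorphN rmorphD mulNr mulrDl opprB opprD !addrA.
by rewrite addrAC (addrAC 1).
Qed.

Lemma main_eq a b c d :
  (1 - iota a * t) * (1 - iota b * t)^-1 = (1 - iota c * t)^-1 * (1 - iota d * t)
  <-> (c + a = d + b /\ c * sh a = d * sh b).
Proof.
set X := 1 - iota a * t; set Y := 1 - iota b * t.
set Z := 1 - iota c * t; set W := 1 - iota d * t.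
have uY : Y \is a GRing.unit by apply: one_sub_unit.
have uZ : Z \is a GRing.unit by apply: one_sub_unit.
have -> : (X * Y^-1 = Z^-1 * W) <-> (Z * X = W * Y).
  split=> E.
    by rewrite -[X](mulrVK uY) mulrA E mulVKr.
  by rewrite -[X](mulKr uZ) E -mulrA mulrK.
rewrite /X /Y /Z /W !expand; split.
  case/coef3 => _ /eqP; rewrite eqr_opp => /eqP -> -> //.
by case=> -> ->.
Qed.

Ltac fld := field; repeat (apply/andP; split); try done.

Lemma final a b c d (hab : a != b) (hcd : c != d) :
  ((1 - iota a * t) * (1 - iota b * t)^-1 = (1 - iota c * t)^-1 * (1 - iota d * t)
   <-> c = sh b * ((a - b) / sh (a - b)) /\ d = sh a * ((a - b) / sh (a - b))) /\
  ((1 - iota a * t) * (1 - iota b * t)^-1 = (1 - iota c * t)^-1 * (1 - iota d * t)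
   <-> sh a = d / ((c - d) / sh (c - d)) /\ sh b = c / ((c - d) / sh (c - d))).
Proof.
rewrite main_eq.
have shB' : forall x y, sh (x - y) = sh x - sh y := shB.
have sh0 : forall x, (sh x == 0) = (x == 0) := sh_eq0.
have shI : forall x y, sh x = sh y -> x = y.
  by move=> x y E; apply/eqP; rewrite -subr_eq0 -sh0 shB' E subrr.
have nz : forall x y : K, x != y -> x - y != 0 by move=> ? ? ?; rewrite subr_eq0.
have nzs : forall x y, x != y -> sh x - sh y != 0 by move=> ? ? ?; rewrite -shB' sh0 nz.
have ab := nz _ _ hab; have ab' := nzs _ _ hab.
have cd := nz _ _ hcd; have cd' := nzs _ _ hcd.
have hba : b != a by rewrite eq_sym.
have ba := nz _ _ hba; have ba' := nzs _ _ hba.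
have part1 : (c + a = d + b /\ c * sh a = d * sh b) <->
    (c = sh b * ((a - b) / sh (a - b)) /\ d = sh a * ((a - b) / sh (a - b))).
  rewrite shB'; split.
    case=> H1 H2.
    have dE : d = c + a - b by rewrite H1 addrK.
    have Hce : c * (sh a - sh b) = (a - b) * sh b.
      by rewrite mulrBr H2 -mulrBl dE; congr (_ * _); ring.
    have Hc : c = sh b * ((a - b) / (sh a - sh b)).
      by rewrite -[LHS](mulfK ab') Hce; fld.
    split => //; rewrite dE Hc; fld.
  case=> -> ->; split; fld.
split => //.
rewrite part1; split.
  case=> Hc Hd.
  have -> : c - d = b - a by rewrite Hc Hd shB'; fld.
  rewrite !shB' Hc Hd shB'; split; fld.
rewrite shB'; case=> Ha Hb.
have E : a - b = d - c.
  apply: shI; rewrite !shB' Ha Hb; fld.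
rewrite -part1; split.
  apply/eqP; rewrite -subr_eq0; apply/eqP.
  transitivity ((a - b) - (d - c)); [ring | by rewrite E subrr].
rewrite Ha Hb; fld.
Qed.
End Gen.

Theorem lemma2p2 (R : realType) (h : R[i]) (h_neq0 : h != 0)
  (a b c d : Kfield R) (hab : a != b) (hcd : c != d)
  (D : unitRingType)
  (D_div : forall u : D, u != 0 -> u \is a GRing.unit)
  (iota : {rmorphism Kfield R -> D}) (t : D)
  (t_comm : forall f : Kfield R, t * iota f = iota (shiftK h 1 f) * t)
  (t_free : forall (n : nat) (s : 'I_n -> Kfield R),
      \sum_(i < n) iota (s i) * t ^+ i = 0 -> forall i, s i = 0) :
  let R1 := (1 - iota a * t) * (1 - iota b * t)^-1 in
  let R2 := (1 - iota c * t)^-1 * (1 - iota d * t) in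
  (R1 = R2 <-> c = shiftK h 1 b * lnp h (a - b) /\
               d = shiftK h 1 a * lnp h (a - b)) /\
  (R1 = R2 <-> shiftK h 1 a = d / lnp h (c - d) /\
               shiftK h 1 b = c / lnp h (c - d)).
Proof.
rewrite /lnp /=; exact: (@final _ _ D_div iota t (shiftK h 1) t_comm t_free a b c d hab hcd).
Qed.
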